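(* For every integer $N\ge1$ there exists a function $\mathrm{Col}:\mathbb Z^+\times\mathrm{Chain}(N)\to\mathbb Z^+$ such that for every integer $k\ge0$ with $\log^{(k)}N\ge1$: (1) if $\mathcal A$ is a chain with $\mathrm{lgt}(\mathcal A)\ge 2k$, then for every $s\ge\mathrm{sz}(\mathcal A_{2k})$, $\mathrm{Col}(s,\mathcal A_{2k})\le 2^{6(s+1)}\log^{(k)}N$; (2) if $\mathcal A=\langle A_0,\dots\rangle$ and $\mathcal A'=\langle A'_0,\dots\rangle$ are chains of the same length, with that length at least $2k$, with $\mathrm{sz}(\mathcal A),\mathrm{sz}(\mathcal A')\le s$, $S^1(\mathcal A)\cap S^1(\mathcal A')\ne\emptyset$ and $A_0\ne A'_0$, then $\mathrm{Col}(s,\mathcal A_{2k})\ne\mathrm{Col}(s,\mathcal A'_{2k})$.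
   Context: A chain in $[N]=\{1,\dots,N\}$ is a finite sequence $\mathcal A=\langle A_0,\dots,A_k\rangle$ of subsets of $[N]$ with $|A_0|=1$ and $A_i\subseteq A_{i+1}$ for all $i$; if $A_0=\{w\}$, $w$ is the leader. $\mathrm{Chain}(N)$ is the set of all chains in $[N]$. The length is $\mathrm{lgt}(\mathcal A)=k$ and the size is $\mathrm{sz}(\mathcal A)=|A_k|$. For $i\le\mathrm{lgt}(\mathcal A)$, the prefix is $\mathcal A_i=\langle A_0,\dots,A_i\rangle$. For a chain $\mathcal A=\langle A_0,\dots,A_k\rangle$ and integer $d\ge0$, a chain $\mathcal B=\langle B_0,\dots,B_{k-d}\rangle$ is within distance $d$ of $\mathcal A$ if $A_{i-d}\subseteq B_i\subseteq A_{i+d}$ for all $i\in\{0,\dots,k-d\}$ (sets with negative index are the empty set); $S^d(\mathcal A)$ is the set of all chains within distance $d$ of $\mathcal A$. $\log^{(i)}$ is the $i$-fold iterated base-2 logarithm, $\log^{(0)}N=N$. *)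

(* Defs.v *)
From Stdlib Require Import Reals.
From mathcomp Require Import all_boot.
Set Implicit Arguments. Unset Strict Implicit. Unset Printing Implicit Defensive.

(* The ground set [N] = {1,...,N} is represented by 'I_N = {0,...,N-1}. *)

Definition is_chain (N : nat) (A : seq {set 'I_N}) : Prop :=
  [/\ 0 < size A,
      #|nth set0 A 0| = 1
    & forall i, i.+1 < size A -> nth set0 A i \subset nth set0 A i.+1].

Definition lgt (N : nat) (A : seq {set 'I_N}) : nat := (size A).-1.

Definition sz (N : nat) (A : seq {set 'I_N}) : nat := #|last set0 A|.

(* prefix A_i = <A_0,...,A_i> *)
Definition chain_prefix (N : nat) (A : seq {set 'I_N}) (i : nat) : seq {set 'I_N} :=
  take i.+1 A.

(* A_j with the convention that sets of negative index (j = i - d < 0) are empty *)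
Definition setA_minus (N : nat) (A : seq {set 'I_N}) (i d : nat) : {set 'I_N} :=
  if i < d then set0 else nth set0 A (i - d).

Definition within_dist (N : nat) (d : nat) (A B : seq {set 'I_N}) : Prop :=
  [/\ d <= lgt A, lgt B = lgt A - d
    & forall i, i <= lgt A - d ->
        setA_minus A i d \subset nth set0 B i /\ nth set0 B i \subset nth set0 A (i + d)].

Definition S_dist (N : nat) (d : nat) (A : seq {set 'I_N}) : seq {set 'I_N} -> Prop :=
  fun B => is_chain B /\ within_dist d A B.

Definition log2R (x : R) : R := Rdiv (ln x) (ln 2).
Definition iter_log (k : nat) (x : R) : R := iter k log2R x.

Definition pow2R (n : nat) : R := pow (IZR 2) n.

(* Main.v *)
Require Import Defs.
From Stdlib Require Import Reals.
From mathcomp Require Import all_boot.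
From Stdlib Require Import Lra Lia.
From mathcomp Require Import zify.
Set Implicit Arguments. Unset Strict Implicit. Unset Printing Implicit Defensive.
Set Warnings "-notation-overridden".
Delimit Scope R_scope with Re.


Lemma INR_muln m n : INR (m * n) = (INR m * INR n)%Re.
Proof. exact: mult_INR. Qed.
Lemma INR_addn m n : INR (m + n) = (INR m + INR n)%Re.
Proof. exact: plus_INR. Qed.
Lemma INR_expn m n : INR (m ^ n) = (INR m ^ n)%Re.
Proof. elim: n => [|n IH] //=; by rewrite expnS INR_muln IH. Qed.
Lemma INR_leq m n : m <= n -> (INR m <= INR n)%Re.
Proof. by move/leP; apply: le_INR. Qed.
Lemma INR_ltn m n : m < n -> (INR m < INR n)%Re.
Proof. by move/ltP; apply: lt_INR. Qed.
Lemma leq_INR m n : (INR m <= INR n)%Re -> m <= n.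
Proof. by move=> H; apply/leP; apply: INR_le. Qed.

Lemma exp_powR (x : R) n : (exp x ^ n = exp (INR n * x))%Re.
Proof.
elim: n => [|n IH]; first by rewrite /= Rmult_0_l exp_0.
rewrite [(_ ^ _)%Re]/= IH -exp_plus; congr exp; rewrite S_INR; ring.
Qed.

Lemma succ_pow_le a : (a.+1) ^ a <= 3 * a ^ a.
Proof.
case: a => [|a] //. apply: leq_INR.
rewrite INR_muln !INR_expn.
set b := INR a.+1.
have hb : (0 < b)%Re by apply: lt_0_INR; apply/ltP.
have -> : INR a.+2 = (b * (1 + / b))%Re by rewrite /b (S_INR (a.+1)); field; move: hb; rewrite /b; lra.
rewrite Rpow_mult_distr Rmult_comm; apply: Rmult_le_compat_r.
  by apply: pow_le; lra.
have -> : INR 3 = 3%Re by rewrite /= ; ring.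
apply: Rle_trans (exp_le_3).
apply: Rle_trans (_ : exp (/ b) ^ a.+1 <= _)%Re.
  apply: pow_incr; split; first by have := Rinv_0_lt_compat _ hb; lra.
  exact: exp_ineq1_le.
rewrite exp_powR -/b Rinv_r; [lra|lra].
Qed.

Lemma pow_fact a : a ^ a <= 3 ^ a * a`!.
Proof.
elim: a => [|a IH] //.
rewrite expnS factS.
apply: leq_trans (_ : a.+1 * (3 * a ^ a) <= _).
  by rewrite leq_mul2l succ_pow_le orbT.
by rewrite [X in _ <= X]mulnCA leq_mul2l expnS -mulnA leq_mul2l IH !orbT.
Qed.

Lemma bin_bound d a : 'C(d * a, a) <= (3 * d) ^ a.
Proof.
have hf : 0 < a`! := fact_gt0 a.
rewrite -(leq_pmul2r hf) bin_ffact.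
apply: leq_trans (_ : (d * a) ^ a <= _).
  have -> : (d * a) ^ a = \prod_(i < a) (d * a) by rewrite prod_nat_const card_ord.
  rewrite ffact_prod; by apply: leq_prod => i _; apply: leq_subr.
by rewrite !expnMn [3 ^ a * d ^ a]mulnC -mulnA leq_mul2l pow_fact orbT.
Qed.


Lemma card_bigcup_le (I : Type) (T : finType) (r : seq I) (P : pred I) (F : I -> {set T}) :
  #|\bigcup_(i <- r | P i) F i| <= \sum_(i <- r | P i) #|F i|.
Proof.
elim: r => [|i r IH]; first by rewrite !big_nil cards0.
rewrite !big_cons; case: (P i) => //.
apply: leq_trans (leq_card_setU _ _).1 _; exact: leq_add.
Qed.

Definition agree n q (v w : {ffun 'I_n -> 'I_q}) : {set 'I_n} := [set i | v i == w i].

Lemma agreeC n q (v w : {ffun 'I_n -> 'I_q}) : agree v w = agree w v.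
Proof. by apply/setP => i; rewrite !inE eq_sym. Qed.

Lemma card_fix n q (w : {ffun 'I_n -> 'I_q}) (S : {set 'I_n}) :
  #|[set v : {ffun 'I_n -> 'I_q} | [forall i in S, v i == w i]]| = q ^ (n - #|S|).
Proof.
pose F := fun i : 'I_n => if i \in S then pred1 (w i) else predT.
have -> : #|[set v : {ffun 'I_n -> 'I_q} | [forall i in S, v i == w i]]| = #|(family F : simpl_pred _)|.
  apply: eq_card => v; rewrite inE; apply/forall_inP/familyP => H i.
    rewrite /F; case: ifP => hi; last by [].
    by rewrite inE; apply: H.
  by move=> hi; have := H i; rewrite /F hi inE.
rewrite card_family foldrE big_map big_enum /=.
rewrite (eq_bigr (fun i => if i \in ~: S then q else 1)); last first.
  move=> i _; rewrite /F inE; case: (i \in S) => /=; last by rewrite card_ord.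
  by rewrite card1.
by rewrite -big_mkcond /= prod_nat_const cardsCs card_ord setCK.
Qed.

Lemma ball_card n q (w : {ffun 'I_n -> 'I_q}) a :
  #|[set v | a <= #|agree v w|]| <= 'C(n, a) * q ^ (n - a).
Proof.
pose Fx := fun S : {set 'I_n} => [set v : {ffun 'I_n -> 'I_q} | [forall i in S, v i == w i]].
apply: leq_trans (_ : #|\bigcup_(S in [set S : {set 'I_n} | #|S| == a]) Fx S| <= _).
  apply: subset_leq_card; apply/subsetP => v; rewrite inE => hv.
  have [s [us ss sub]] := card_geqP hv.
  apply/bigcupP; exists [set x in s].
    by rewrite inE cardsE (card_uniqP us) ss.
  rewrite inE; apply/forall_inP => i; rewrite inE => /sub; by rewrite inE.
apply: leq_trans (card_bigcup_le _ _ _) _.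
rewrite (eq_bigr (fun _ => q ^ (n - a))); last first.
  by move=> S; rewrite inE => /eqP hS; rewrite card_fix hS.
by rewrite sum_nat_const card_draws card_ord mulnC.
Qed.

Lemma mem_bigcup_seq (I : eqType) (T : finType) (r : seq I) (F : I -> {set T}) i x :
  i \in r -> x \in F i -> x \in \bigcup_(j <- r) F j.
Proof.
elim: r => [|j r IH] //; rewrite inE big_cons inE => /orP [/eqP <-|hi] hx.
  by rewrite hx.
by rewrite IH ?orbT.
Qed.


Definition aM (M : nat) := up_log 2 M.+2.
Definition qq (D : nat) := (6 * D + 5).+1.
Definition nn (D M : nat) := D.+1 * aM M.
Definition word (D M : nat) := {ffun 'I_(nn D M) -> 'I_(qq D)}.
Definition goodf D M (f : {ffun 'I_M.+1 -> word D M}) :=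
  [forall i, forall j, (i != j) ==> (#|agree (f i) (f j)| < aM M)].

Lemma aM_gt0 M : 0 < aM M.
Proof. by rewrite /aM up_log_gt0. Qed.

Lemma aM_big M : M.+2 <= 2 ^ aM M.
Proof. exact: up_logP. Qed.

Lemma qq_eq D : qq D = 2 * (3 * D.+1).
Proof. rewrite /qq; lia. Qed.

Lemma sum_le_size (T : Type) (g : seq T) (f : T -> nat) K :
  (forall x, f x <= K) -> \sum_(x <- g) f x <= size g * K.
Proof.
move=> H; elim: g => [|x g IH]; first by rewrite big_nil.
by rewrite big_cons /= mulSn leq_add.
Qed.

Lemma sum_le_size_in (T : eqType) (g : seq T) (f : T -> nat) K :
  (forall x, x \in g -> f x <= K) -> \sum_(x <- g) f x <= size g * K.
Proof.
elim: g => [|x g IH] H; first by rewrite big_nil.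
rewrite big_cons /= mulSn leq_add //; first by apply: H; rewrite inE eqxx.
by apply: IH => y hy; apply: H; rewrite inE hy orbT.
Qed.

Lemma greedy D M j : j <= M.+1 ->
  exists g : seq (word D M), size g = j /\
    pairwise (fun v w : word D M => #|agree v w| < aM M) g.
Proof.
elim: j => [|j IH] hj; first by exists [::].
have [g [sg pg]] := IH (ltnW hj).
set a := aM M.
have Hex : [exists v : word D M, all (fun w => #|agree v w| < a) g].
  apply: contraT => /existsPn Hn.
  pose Ball := fun w : word D M => [set v : word D M | a <= #|agree v w|].
  have Hsub : [set: word D M] \subset \bigcup_(w <- g) Ball w.
    apply/subsetP => v _; have := Hn v; rewrite -has_predC => /hasP [w wg].
    rewrite /= -leqNgt => hw; apply: (mem_bigcup_seq wg).
    by rewrite inE hw.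
  have := leq_trans (subset_leq_card Hsub) (card_bigcup_le _ _ _).
  rewrite cardsT card_ffun !card_ord.
  move/leq_trans => /(_ _ (sum_le_size g (fun w => ball_card w a))).
  rewrite leqNgt => /negP Hc; exfalso; apply: Hc.
  have ha : a <= nn D M by rewrite /nn -{1}[a]mul1n leq_mul2r ltn0Sn orbT.
  have -> : qq D ^ nn D M = qq D ^ a * qq D ^ (nn D M - a) by rewrite -expnD subnKC.
  rewrite mulnA ltn_pmul2r ?expn_gt0 // qq_eq.
  apply: (@leq_ltn_trans (M * (3 * D.+1) ^ a)).
    rewrite sg; apply: leq_mul; [by rewrite -ltnS | by rewrite /nn; apply: bin_bound].
  rewrite [X in _ < X]expnMn ltn_pmul2r ?expn_gt0 //.
  by apply: leq_trans (aM_big M).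
have [v hv] := existsP Hex.
exists (v :: g); split; first by rewrite /= sg.
by rewrite pairwise_cons hv pg.
Qed.

Lemma code_exists D M : exists f : {ffun 'I_M.+1 -> word D M}, goodf f.
Proof.
have [g [sg pg]] := greedy D (leqnn M.+1).
pose w0 : word D M := [ffun _ => ord0].
exists [ffun i : 'I_M.+1 => nth w0 g i].
move/pairwiseP: pg => /(_ w0) H.
have key : forall i j : 'I_M.+1, i < j -> #|agree (nth w0 g i) (nth w0 g j)| < aM M.
  by move=> i j hij; apply: H => //; rewrite inE sg.
apply/forallP => i; apply/forallP => j; apply/implyP => hij; rewrite !ffunE.
case: (ltngtP i j) => hlt; first exact: key.
  by rewrite agreeC; apply: key.
by move: hij; rewrite (val_inj hlt) eqxx.
Qed.

Definition reduce D M (x : nat) (ys : seq nat) : nat :=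
  match [pick f : {ffun 'I_M.+1 -> word D M} | goodf f] with
  | Some f =>
     match [pick i : 'I_(nn D M) | all (fun y => (y == x) || (f (inord y) i != f (inord x) i)) ys] with
     | Some i => i * qq D + f (inord x) i + 1
     | None => 1 end
  | None => 1 end.

Lemma reduce_pos D M x ys : 0 < reduce D M x ys.
Proof. by rewrite /reduce; case: pickP => // f _; case: pickP => // i _; rewrite addn1. Qed.

Lemma reduce_le D M x ys : reduce D M x ys <= nn D M * qq D.
Proof.
have hn : 0 < nn D M by rewrite /nn muln_gt0 aM_gt0.
rewrite /reduce; case: pickP => [f _|_]; last by rewrite muln_gt0 hn.
case: pickP => [i _|_]; last by rewrite muln_gt0 hn.
rewrite addn1 -addnS.
apply: leq_trans (_ : i.+1 * qq D <= _); last by rewrite leq_mul2r ltn_ord orbT.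
by rewrite mulSn [qq D + _]addnC leq_add2l ltn_ord.
Qed.

Lemma exists_good D M (f : {ffun 'I_M.+1 -> word D M}) x ys :
  goodf f -> x <= M -> size ys <= D.+1 -> all (fun z => z <= M) ys ->
  exists i : 'I_(nn D M), all (fun y => (y == x) || (f (inord y) i != f (inord x) i)) ys.
Proof.
move=> gf hx hs hall.
pose Bad := \bigcup_(y <- [seq y <- ys | y != x]) agree (f (inord y)) (f (inord x)).
have hB : #|Bad| < nn D M.
  apply: leq_ltn_trans (card_bigcup_le _ _ _) _.
  apply: leq_ltn_trans (sum_le_size_in (K := (aM M).-1) _) _.
    move=> y; rewrite mem_filter => /andP [hyx hy].
    have hyM : y <= M by move/allP: hall => /(_ y hy).
    rewrite -ltnS prednK ?aM_gt0 //.
    have := gf; move/forallP => /(_ (inord y)) /forallP /(_ (inord x)) /implyP; apply.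
    apply: contra hyx => /eqP /(congr1 (@nat_of_ord _)); rewrite !inordK // => ->.
    by rewrite eqxx.
  apply: leq_ltn_trans (_ : D.+1 * (aM M).-1 < _); last first.
    by rewrite ltn_pmul2l // prednK ?aM_gt0.
  rewrite leq_mul2r; apply/orP; right; apply: leq_trans hs; by rewrite size_filter count_size.
have : [exists i, i \notin Bad].
  apply: contraT => /existsPn Hn.
  have : #|[set: 'I_(nn D M)]| <= #|Bad|.
    by apply: subset_leq_card; apply/subsetP => i _; have := Hn i; rewrite negbK.
  by rewrite cardsT card_ord leqNgt hB.
move/existsP => [i hi]; exists i; apply/allP => y hy.
apply/orP; case: (boolP (y == x)) => hyx; [by left|right].
apply: contra hi => /eqP he; apply: (mem_bigcup_seq (i := y)).
  by rewrite mem_filter hyx hy.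
by rewrite inE he.
Qed.

Lemma reduce_ok D M x y ys ys' :
  x <= M -> y <= M -> x != y -> y \in ys -> x \in ys' ->
  size ys <= D.+1 -> size ys' <= D.+1 ->
  all (fun z => z <= M) ys -> all (fun z => z <= M) ys' ->
  reduce D M x ys != reduce D M y ys'.
Proof.
move=> hx hy hxy hyys hxys hs hs' ha ha'.
have [f0 gf0] := code_exists D M.
rewrite /reduce; case: pickP => [f gf|H]; last by have := H f0; rewrite gf0.
case: pickP => [i hi|H]; last first.
  by have [j hj] := exists_good gf hx hs ha; have := H j; rewrite hj.
case: pickP => [i' hi'|H]; last first.
  by have [j hj] := exists_good gf hy hs' ha'; have := H j; rewrite hj.
apply/negP => /eqP; rewrite !addn1 => [[E2]].
have hq : 0 < qq D by [].
have hii : i = i'.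
  apply: val_inj; have := congr1 (divn^~ (qq D)) E2.
  by rewrite /= !divnMDl // !divn_small ?ltn_ord // !addn0.
subst i'.
move/addnI: E2 => /val_inj E3.
move/allP: hi => /(_ y hyys); rewrite eq_sym (negbTE hxy) /= E3.
by rewrite eqxx.
Qed.


Lemma mono_up (f : nat -> bool) len e j :
  (forall j, j.+1 < len -> f j -> f j.+1) -> f e -> e <= j -> j < len -> f j.
Proof.
move=> hm he; elim: j => [|j IH]; first by rewrite leqn0 => /eqP <-.
rewrite leq_eqVlt => /orP [/eqP <- //|hej] hj.
by apply: hm => //; apply: IH => //; apply: ltnW.
Qed.

Lemma find_mono (f : nat -> bool) len :
  (forall j, j.+1 < len -> f j -> f j.+1) ->
  forall j, j < len -> f j = (find f (iota 0 len) <= j).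
Proof.
move=> hm j hj; apply/idP/idP => [fj|hle].
  rewrite leqNgt; apply/negP => /(before_find 0).
  by rewrite nth_iota // add0n fj.
have hlt : find f (iota 0 len) < len by apply: leq_ltn_trans hle hj.
have hhas : has f (iota 0 len) by rewrite has_find size_iota.
have := nth_find 0 hhas; rewrite nth_iota // add0n => hf.
exact: (mono_up hm hf hle hj).
Qed.

Definition ent N (A : seq {set 'I_N}) (len : nat) (x : 'I_N) : nat :=
  find (fun j => x \in nth set0 A j) (iota 0 len).

Definition decode N (P : seq {set 'I_N}) (k : nat) (t : seq nat) : seq {set 'I_N} :=
  mkseq (fun j => [set x in nth set0 P k.*2.+2 |
     ent P k.*2.+3 x + nth 0 t (index x (enum (nth set0 P k.*2.+2))) <= j + 2]) k.*2.+1.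

Fixpoint allcodes (m : nat) : seq (seq nat) :=
  if m is m'.+1 then [seq i :: t | i <- iota 0 5, t <- allcodes m'] else [:: [::]].

Lemma allcodes_size m : size (allcodes m) = 5 ^ m.
Proof. elim: m => [|m IH] //=; rewrite !size_cat !size_map IH expnS /=; lia. Qed.

Lemma allcodes_mem t : all (fun i => i < 5) t -> t \in allcodes (size t).
Proof.
elim: t => [|i t IH] //= /andP [hi ht].
have := IH ht => {}IH.
by case: i hi => [|[|[|[|[|i]]]]] // _; rewrite !mem_cat map_f ?orbT.
Qed.

Section Decode.
Variables (N k : nat) (P Q : seq {set 'I_N}).
Hypothesis hP : forall j, j < k.*2.+2 -> nth set0 P j \subset nth set0 P j.+1.
Hypothesis hQs : size Q = k.*2.+1.
Hypothesis hQ : forall j, j < k.*2 -> nth set0 Q j \subset nth set0 Q j.+1.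
Hypothesis h1 : forall j, j <= k.*2 -> nth set0 Q j \subset nth set0 P j.+2.
Hypothesis h2 : forall j, j.+2 <= k.*2 -> nth set0 P j \subset nth set0 Q j.+2.

Let T := nth set0 P k.*2.+2.
Let eP x := ent P k.*2.+3 x.
Let eQ x := ent Q k.*2.+1 x.

Let fP x := find_mono (f := fun j => x \in nth set0 P j) (len := k.*2.+3)
   (fun j hj hx => subsetP (hP hj) x hx).
Let fQ x := find_mono (f := fun j => x \in nth set0 Q j) (len := k.*2.+1)
   (fun j hj hx => subsetP (hQ hj) x hx).

Lemma eP_le x : eP x <= k.*2.+3.
Proof. by rewrite /eP /ent; apply: leq_trans (find_size _ _) _; rewrite size_iota. Qed.
Lemma eQ_le x : eQ x <= k.*2.+1.
Proof. by rewrite /eQ /ent; apply: leq_trans (find_size _ _) _; rewrite size_iota. Qed.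

Lemma b1 x : x \in T -> eP x <= eQ x + 2.
Proof.
move=> xT.
have hT : eP x <= k.*2.+2 by rewrite -(fP x) //.
case: (ltnP (eQ x) k.*2.+1) => h.
  have hx : x \in nth set0 Q (eQ x) by rewrite (fQ x) //.
  have hx2 := subsetP (h1 (h : eQ x <= k.*2)) x hx.
  by rewrite addn2 -(fP x) // ltnS ltnS.
by apply: leq_trans hT _; rewrite addn2 ltnS ltnS; apply: ltnW.
Qed.

Lemma b2 x : x \in T -> eQ x <= eP x + 2.
Proof.
move=> xT.
have hT : eP x <= k.*2.+2 by rewrite -(fP x) //.
case: (leqP (eP x).+2 k.*2) => h.
  have hx : x \in nth set0 P (eP x) by rewrite (fP x) // ltnS ltnW // ltnS.
  have hx2 := subsetP (h2 h) x hx.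
  by rewrite addn2 -(fQ x).
by apply: leq_trans (eQ_le x) _; rewrite addn2.
Qed.

Lemma decode_surj : exists2 t, t \in allcodes #|T| & decode P k t = Q.
Proof.
exists [seq eQ x + 2 - eP x | x <- enum T].
  have -> : #|T| = size [seq eQ x + 2 - eP x | x <- enum T] by rewrite size_map cardE.
  apply: allcodes_mem; apply/allP => i /mapP [x]; rewrite mem_enum => xT ->.
  by have := b2 xT; lia.
apply: (@eq_from_nth _ set0); first by rewrite size_mkseq hQs.
rewrite size_mkseq => j hj; rewrite nth_mkseq //.
apply/setP => x; rewrite inE.
case: (boolP (x \in T)) => xT /=.
  rewrite (nth_map x) ?index_mem ?mem_enum // nth_index ?mem_enum //.
  have := b1 xT; rewrite -/(eP x).
  move=> hb.
  have -> : eP x + (eQ x + 2 - eP x) = eQ x + 2 by lia.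
  by rewrite leq_add2r (fQ x).
apply/esym/negP => hx.
have hx2 := subsetP (h1 (hj : j <= k.*2)) x hx.
apply/negP: xT; rewrite negbK.
rewrite /T (fP x) //; apply: (@leq_trans j.+2); last by [].
by rewrite -(fP x) // !ltnS ltnW.
Qed.
End Decode.


Fixpoint Mk (N s k : nat) : nat :=
  if k is k'.+1 then nn (5 ^ s).-1 (Mk N s k') * qq (5 ^ s).-1 else N.

Fixpoint colk N (s k : nat) (P : seq {set 'I_N}) : nat :=
  match k with
  | 0 => if [pick x in nth set0 P 0] is Some x then x.+1 else 1
  | k'.+1 => reduce (5 ^ s).-1 (Mk N s k') (colk s k' (take k'.*2.+1 P))
       [seq colk s k' (decode P k' t) | t <- allcodes #|nth set0 P k'.*2.+2|]
  end.

Lemma colk_pos N s k (P : seq {set 'I_N}) : 0 < colk s k P.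
Proof. case: k => [|k] /=; last exact: reduce_pos. by case: pickP. Qed.

Lemma colk_le N s k (P : seq {set 'I_N}) : 0 < N -> colk s k P <= Mk N s k.
Proof.
move=> hN; case: k => [|k] /=; last exact: reduce_le.
by case: pickP => // x _; apply: ltn_ord.
Qed.

Lemma chain_mono N (A : seq {set 'I_N}) i j :
  is_chain A -> i <= j -> j < size A -> nth set0 A i \subset nth set0 A j.
Proof.
case=> _ _ hc; elim: j => [|j IH]; first by rewrite leqn0 => /eqP ->.
rewrite leq_eqVlt => /orP [/eqP -> //|hij] hj.
apply: subset_trans (IH hij (ltnW hj)) (hc _ hj).
Qed.

Lemma chain_sz N (A : seq {set 'I_N}) i :
  is_chain A -> i < size A -> #|nth set0 A i| <= sz A.
Proof.
move=> hA hi; rewrite /sz; case: (hA) => hs _ _.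
rewrite -nth_last; apply: subset_leq_card; apply: chain_mono => //.
  by rewrite -ltnS prednK.
by rewrite prednK // ltnSn.
Qed.

Lemma S1_sub N (A A' B : seq {set 'I_N}) j :
  S_dist 1 A B -> S_dist 1 A' B -> lgt A = lgt A' -> j.+2 < size A ->
  nth set0 A' j \subset nth set0 A j.+2.
Proof.
move=> [_ [_ _ hA]] [_ [_ _ hA']] hl hj.
have hi : j.+1 <= lgt A - 1 by rewrite /lgt; lia.
have [_ hsub] := hA _ hi.
have := hA' j.+1; rewrite -hl => /(_ hi) [hsub' _].
move: hsub'; rewrite /setA_minus ltnS ltn0 subn1 /= => hsub'.
by apply: subset_trans hsub' _; rewrite addn1 in hsub.
Qed.

Lemma size_of_lgt N (A : seq {set 'I_N}) : is_chain A -> size A = (lgt A).+1.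
Proof. by case=> hs _ _; rewrite /lgt prednK. Qed.

Lemma mem_ys N s k (A A' B : seq {set 'I_N}) :
  is_chain A -> is_chain A' -> lgt A = lgt A' -> k.*2.+2 <= lgt A ->
  S_dist 1 A B -> S_dist 1 A' B ->
  colk s k (take k.*2.+1 A') \in
    [seq colk s k (decode (take k.*2.+3 A) k t) | t <- allcodes #|nth set0 (take k.*2.+3 A) k.*2.+2|].
Proof.
move=> hA hA' hl hk hB hB'.
have sA := size_of_lgt hA; have sA' := size_of_lgt hA'.
have [t ht <-] : exists2 t, t \in allcodes #|nth set0 (take k.*2.+3 A) k.*2.+2| &
    decode (take k.*2.+3 A) k t = take k.*2.+1 A'.
  apply: decode_surj.
  - move=> j hj; rewrite !nth_take //; last by apply: ltn_trans hj _.
    by apply: chain_mono => //; rewrite sA; lia.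
  - by rewrite size_take sA' -hl; case: ifP => //; lia.
  - move=> j hj; rewrite !nth_take //; try lia.
    by apply: chain_mono => //; rewrite sA' -hl; lia.
  - move=> j hj; rewrite !nth_take //; try lia.
    by apply: (S1_sub hB hB' hl); rewrite sA; lia.
  - move=> j hj; rewrite !nth_take //; try lia.
    by apply: (S1_sub hB' hB (esym hl)); rewrite sA' -hl; lia.
by apply: map_f.
Qed.

Lemma colk_dist N s k : 0 < N -> forall A A' : seq {set 'I_N},
  is_chain A -> is_chain A' -> lgt A = lgt A' -> k.*2 <= lgt A ->
  sz A <= s -> sz A' <= s -> (exists B, S_dist 1 A B /\ S_dist 1 A' B) ->
  nth set0 A 0 != nth set0 A' 0 ->
  colk s k (take k.*2.+1 A) != colk s k (take k.*2.+1 A').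
Proof.
move=> hN; elim: k => [|k IH] A A' hA hA' hl hk hs hs' [B [hB hB']] hne.
  rewrite /= !nth_take //.
  case: (hA) => _ /eqP /cards1P [w hw] _; case: (hA') => _ /eqP /cards1P [w' hw'] _.
  rewrite hw hw' in hne *.
  case: pickP => [x hx|H]; last by have := H w; rewrite set11.
  case: pickP => [x' hx'|H]; last by have := H w'; rewrite set11.
  move: hx hx'; rewrite !inE => /eqP -> /eqP ->.
  by apply: contra hne => /eqP [/val_inj ->].
have sA := size_of_lgt hA; have sA' := size_of_lgt hA'.
have hk' : k.*2.+2 <= lgt A by [].
rewrite [colk _ k.+1 _]/= [colk _ k.+1 (take _ A')]/=.
rewrite !take_takel //; try by rewrite doubleS; lia.
apply: reduce_ok.
- exact: colk_le.
- exact: colk_le.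
- apply: IH => //; last by exists B.
  by apply: leq_trans hk'; rewrite -addn2 leq_addr.
- exact: (mem_ys s hA hA' hl hk' hB hB').
- apply: (mem_ys s hA' hA (esym hl) _ hB' hB); by rewrite -hl.
- rewrite size_map allcodes_size prednK ?expn_gt0 // leq_exp2l //.
  rewrite nth_take ?doubleS //.
  by apply: leq_trans hs; apply: chain_sz => //; rewrite sA; lia.
- rewrite size_map allcodes_size prednK ?expn_gt0 // leq_exp2l //.
  rewrite nth_take ?doubleS //.
  by apply: leq_trans hs'; apply: chain_sz => //; rewrite sA' -hl; lia.
- by apply/allP => z /mapP [t _ ->]; apply: colk_le.
- by apply/allP => z /mapP [t _ ->]; apply: colk_le.
Qed.


Lemma natK s : 6 * 5 ^ s * 5 ^ s * (6 * s + 9) <= 2 ^ (6 * s.+1).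
Proof.
elim: s => [|s IH] //.
have -> : 2 ^ (6 * s.+2) = 64 * 2 ^ (6 * s.+1).
  by rewrite (_ : 64 = 2 ^ 6) // -expnD; congr (_ ^ _); lia.
rewrite [5 ^ s.+1]expnS.
have : 6 * (5 * 5 ^ s) * (5 * 5 ^ s) * (6 * s.+1 + 9) <= 64 * (6 * 5 ^ s * 5 ^ s * (6 * s + 9)).
  set P := 5 ^ s; nia.
move/leq_trans; apply; rewrite leq_mul2l; apply/orP; right; exact: IH.
Qed.

Lemma ln2_pos : (0 < ln 2)%Re.
Proof. have := ln_lt_2; lra. Qed.

Lemma log2_ge (L : R) : (1 <= log2R L)%Re -> (2 <= L)%Re.
Proof.
rewrite /log2R => h.
have l2 := ln2_pos.
have hl : (ln 2 <= ln L)%Re.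
  have -> : ln L = (ln L / ln 2 * ln 2)%Re by field; lra.
  nra.
have hL : (0 < L)%Re.
  destruct (Rlt_le_dec 0 L) as [hL0|hL0]; first exact: hL0.
  have h0 : ln L = 0%Re by unfold ln; destruct (Rlt_dec 0 L) as [hh|hh]; [exfalso; lra|reflexivity].
  lra.
case: (Rlt_le_dec L 2) => // hlt.
have := ln_increasing _ _ hL hlt; lra.
Qed.

Lemma pow_lt_log (d : nat) (L : R) : (2 ^ d < L)%Re -> (INR d < log2R L)%Re.
Proof.
move=> h.
have l2 := ln2_pos.
have hp : (0 < 2 ^ d)%Re by apply: pow_lt; lra.
have := ln_increasing _ _ hp h; rewrite ln_pow; last lra.
rewrite /log2R => h2.
apply: (Rmult_lt_reg_r (ln 2)) => //.
have -> : (ln L / ln 2 * ln 2 = ln L)%Re by field; lra.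
exact: h2.
Qed.

Lemma Mk_eq N s k : Mk N s k.+1 = 6 * 5 ^ s * 5 ^ s * aM (Mk N s k).
Proof.
rewrite /= /nn qq_eq prednK ?expn_gt0 //.
set P := 5 ^ s; set a := aM _; nia.
Qed.

Lemma INR2 : INR 2 = 2%Re.
Proof. by rewrite /=; ring. Qed.

Lemma a_bound (M s : nat) (L : R) :
  (INR M <= pow2R (6 * (s + 1)) * L)%Re -> (1 <= log2R L)%Re ->
  (INR (aM M) <= log2R L + INR (6 * s + 8))%Re.
Proof.
move=> hM hl.
have hL := log2_ge hl.
case: (leqP (aM M) (6 * s + 8)) => ha.
  have := INR_leq ha; lra.
set d := aM M - (6 * s + 8).
have had : aM M = (d + (6 * s + 8))%N by rewrite /d subnK // ltnW.
have hg := up_log_gtn (isT : 1 < 2) (isT : 1 < M.+2).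
rewrite -/(aM M) had (_ : (d + (6 * s + 8)).-1 = d + 6 * (s + 1) + 1)%N in hg; last lia.
move/INR_ltn: hg; rewrite INR_expn INR2 (pow_add _ (d + _)) (pow_add _ d).
have -> : INR M.+2 = (INR M + 2)%Re by rewrite !S_INR; ring.
set C := (2 ^ (6 * (s + 1)))%Re.
have hC : (1 <= C)%Re by apply: pow_R1_Rle; lra.
have hC' : pow2R (6 * (s + 1)) = C by [].
rewrite hC' in hM.
have hp : (0 < 2 ^ d)%Re by apply: pow_lt; lra.
move=> h.
have hdL : (2 ^ d < L)%Re by nra.
have := pow_lt_log hdL; rewrite had INR_addn; lra.
Qed.

Lemma Mk_bound N s k : (1 <= iter_log k (INR N))%Re ->
  (INR (Mk N s k) <= pow2R (6 * (s + 1)) * iter_log k (INR N))%Re.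
Proof.
have hC : (1 <= pow2R (6 * (s + 1)))%Re by apply: pow_R1_Rle; lra.
elim: k => [|k IH] hk.
  rewrite /= in hk *; have := pos_INR N; nra.
have hl : (1 <= log2R (iter_log k (INR N)))%Re by [].
have hL := log2_ge hl.
have hM := IH (ltac:(lra)).
have ha := a_bound hM hl.
rewrite Mk_eq INR_muln.
change (iter_log k.+1 (INR N)) with (log2R (iter_log k (INR N))).
set l := log2R _ in hl ha *.
have hK := INR_leq (natK s).
rewrite INR_muln INR_expn INR2 in hK.
rewrite (_ : (2 ^ (6 * s.+1) = pow2R (6 * (s + 1)))%Re) in hK; last by rewrite /pow2R addn1.
set K := INR (6 * 5 ^ s * 5 ^ s) in hK *.
have hK0 : (0 <= K)%Re by apply: pos_INR.
set C := pow2R _ in hK hC *.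
have h69 : INR (6 * s + 9) = (INR (6 * s + 8) + 1)%Re by rewrite -S_INR addnS.
rewrite h69 in hK.
have h8 := pos_INR (6 * s + 8).
set E := INR (6 * s + 8) in hK ha h8.
set a := INR _ in ha.
apply: (Rle_trans _ (K * (l + E))); first by apply: Rmult_le_compat_l.
have hKE : (0 <= K * E)%Re by apply: Rmult_le_pos.
apply: (Rle_trans _ (K * (E + 1) * l)); first by nra.
apply: Rmult_le_compat_r; lra.
Qed.


Unset Implicit Arguments.

Theorem mainTheorem11 (N : nat) (hN : 1 <= N) :
  exists Col : nat -> seq {set 'I_N} -> nat,
    (* Col : Z^+ x Chain(N) -> Z^+ *)
    (forall (s : nat) (A : seq {set 'I_N}), 0 < s -> is_chain A -> 0 < Col s A) /\
    (forall k : nat, Rle (IZR 1) (iter_log k (INR N)) ->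
      (* (1) *)
      (forall (A : seq {set 'I_N}) (s : nat),
         is_chain A -> 2 * k <= lgt A -> sz (chain_prefix A (2 * k)) <= s ->
         Rle (INR (Col s (chain_prefix A (2 * k))))
             (Rmult (pow2R (6 * (s + 1))) (iter_log k (INR N)))) /\
      (* (2) *)
      (forall (A A' : seq {set 'I_N}) (s : nat),
         is_chain A -> is_chain A' -> lgt A = lgt A' -> 2 * k <= lgt A ->
         sz A <= s -> sz A' <= s ->
         (exists B, S_dist 1 A B /\ S_dist 1 A' B) ->
         nth set0 A 0 != nth set0 A' 0 ->
         Col s (chain_prefix A (2 * k)) != Col s (chain_prefix A' (2 * k)))).
Proof.
exists (fun s P => colk s (lgt P)./2 P).
split; first by move=> s A _ _; apply: colk_pos.
move=> k hk.
have hlgt : forall A : seq {set 'I_N}, is_chain A -> 2 * k <= lgt A ->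
    (lgt (chain_prefix A (2 * k)))./2 = k /\ chain_prefix A (2 * k) = take k.*2.+1 A.
  move=> A hA hkA; rewrite /chain_prefix mul2n; split => //.
  rewrite /lgt size_take (size_of_lgt hA).
  case: ifP => hf /=; first by rewrite doubleK.
  move/negbT: hf; rewrite -leqNgt => hf; have -> : lgt A = k.*2 by move: hkA hf; rewrite mul2n; lia.
  by rewrite doubleK.
split.
  move=> A s hA hkA _; have [-> ->] := hlgt A hA hkA.
  apply: Rle_trans (Mk_bound s hk).
  by apply: INR_leq; apply: colk_le.
move=> A A' s hA hA' hl hkA hs hs' hB hne.
have [-> ->] := hlgt A hA hkA.
have [-> ->] := hlgt A' hA' (ltac:(by rewrite -hl)).
apply: colk_dist => //; by rewrite -mul2n.
Qed.
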